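(* Let $G\in\mathbb{R}^{n\times n}$ and $\overline G:=\Pi_{\mathfrak{B}_n}(G)$. Define $\Theta^G\in\mathbb{R}^{n\times n}$ by $\Theta^G_{ij}=1$ if $\overline G_{ij}=0$ and $\Theta^G_{ij}=0$ otherwise, and the linear operator $\Xi:\mathbb{R}^{n\times n}\to\mathbb{R}^{n\times n}$ by $\Xi(H):=H-\Theta^G\circ H$. Then the linear operator $\mathcal{P}:\mathbb{R}^{n\times n}\to\mathbb{R}^{n\times n}$, \[ \mathcal{P}(H):=\Xi(H)-\Xi\mathcal{B}^*(\mathcal{B}\Xi\mathcal{B}^* )^{\dagger}\mathcal{B}\Xi(H),\qquad H\in\mathbb{R}^{n\times n}, \] is the HS-Jacobian of $\Pi_{\mathfrak{B}_n}$ at $G$. Moreover, $\mathcal{P}$ is self-adjoint and positive semidefinite.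
   Context: $\mathfrak{B}_n:=\{X\in\mathbb{R}^{n\times n}\mid Xe=e,\ X^Te=e,\ X\ge0\}$ is the Birkhoff polytope ($e$ the all-ones vector in $\mathbb{R}^n$, $X\ge0$ entrywise), and $\Pi_{\mathfrak{B}_n}$ is the Euclidean (Frobenius-norm) projection onto it. $\circ$ is the Hadamard product. $\mathcal{B}:\mathbb{R}^{n\times n}\to\mathbb{R}^{2n}$, $\mathcal{B}(X):=[(Xe)^T\ (X^Te)^T]^T$, with adjoint $\mathcal{B}^*$ (w.r.t. the trace inner product), so that $\mathfrak{B}_n=\{X\mid \mathcal{B}X=[e^T\ e^T]^T,\ X\ge0\}$. $\dagger$ denotes the Moore–Penrose pseudo-inverse. HS-Jacobian: for a polyhedral set $D=\{x\in\mathbb{R}^N\mid Ax\ge b,\ Bx=d\}$ and a point $x$, with $I(x)=\{i\mid A_i\Pi_D(x)=b_i\}$ the active inequality indices at $\Pi_D(x)$ and $A_{I(x)}$ the corresponding rows of $A$, the HS-Jacobian of $\Pi_D$ at $x$ is $P_0:=I_N-[A_{I(x)}^T\ B^T]\left(\begin{bmatrix}A_{I(x)}\\ B\end{bmatrix}[A_{I(x)}^T\ B^T]\right)^{\dagger}\begin{bmatrix}A_{I(x)}\\ B\end{bmatrix}$. Here this is applied with $\mathbb{R}^{n\times n}\cong\mathbb{R}^{n^2}$, inequality constraints $X\ge 0$ (i.e., $A$ the identity, $b=0$) and equality constraints $\mathcal{B}X=[e^T\ e^T]^T$. *)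

(* Defs.v *)
From HB Require Import structures.
From mathcomp Require Import all_boot all_order all_algebra.
From mathcomp Require Import reals.
From Stdlib Require Import ClassicalEpsilon.
Set Implicit Arguments. Unset Strict Implicit. Unset Printing Implicit Defensive.
Import Order.TTheory GRing.Theory Num.Theory.
Local Open Scope ring_scope.

Section Defs.
Variable R : realType.

Definition mdot m p (X Y : 'M[R]_(m, p)) : R := \tr (X^T *m Y).
Definition fnorm2 m p (X : 'M[R]_(m, p)) : R := mdot X X.

Definition is_MP m p (A : 'M[R]_(m, p)) (X : 'M[R]_(p, m)) : Prop :=
  [/\ A *m X *m A = A, X *m A *m X = X, (A *m X)^T = A *m X & (X *m A)^T = X *m A].
Definition pinv m p (A : 'M[R]_(m, p)) : 'M[R]_(p, m) :=
  epsilon (inhabits 0) (is_MP A).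

Definition inD k q N (A : 'M[R]_(k, N)) (b : 'cV[R]_k) (Bc : 'M[R]_(q, N))
  (d : 'cV[R]_q) (x : 'cV[R]_N) : Prop :=
  (forall i, b i 0 <= (A *m x) i 0) /\ Bc *m x = d.
Definition projD k q N (A : 'M[R]_(k, N)) (b : 'cV[R]_k) (Bc : 'M[R]_(q, N))
  (d : 'cV[R]_q) (x : 'cV[R]_N) : 'cV[R]_N :=
  epsilon (inhabits 0) (fun y => inD A b Bc d y /\
    forall z, inD A b Bc d z -> fnorm2 (x - y) <= fnorm2 (x - z)).

Definition active k q N (A : 'M[R]_(k, N)) (b : 'cV[R]_k) (Bc : 'M[R]_(q, N))
  (d : 'cV[R]_q) (x : 'cV[R]_N) : {set 'I_k} :=
  [set i | (A *m projD A b Bc d x) i 0 == b i 0].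
Definition HSjac k q N (A : 'M[R]_(k, N)) (b : 'cV[R]_k) (Bc : 'M[R]_(q, N))
  (d : 'cV[R]_q) (x : 'cV[R]_N) : 'M[R]_N :=
  let I := active A b Bc d x in
  let AI : 'M[R]_(#|I|, N) := rowsub (fun r : 'I_#|I| => enum_val r) A in
  let C := col_mx AI Bc in
  1%:M - C^T *m pinv (C *m C^T) *m C.

Definition vecc n (X : 'M[R]_n) : 'cV[R]_(n * n) := (mxvec X)^T.

Definition Bop n (X : 'M[R]_n) : 'cV[R]_(n + n) :=
  col_mx (X *m const_mx 1) (X^T *m const_mx 1).
Definition Badj n (y : 'cV[R]_(n + n)) : 'M[R]_n :=
  usubmx y *m const_mx 1 + const_mx 1 *m (dsubmx y)^T.
Definition Bmat n : 'M[R]_(n + n, n * n) :=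
  \matrix_(r, l) (Bop (vec_mx (delta_mx 0 l) : 'M[R]_n)) r 0.

Definition birkhoff n (X : 'M[R]_n) : Prop :=
  Bop X = const_mx 1 /\ forall i j, 0 <= X i j.
Definition projB n (G : 'M[R]_n) : 'M[R]_n :=
  epsilon (inhabits 0) (fun Y => birkhoff Y /\
    forall X, birkhoff X -> fnorm2 (G - Y) <= fnorm2 (G - X)).

Definition hadamard n (X Y : 'M[R]_n) : 'M[R]_n := \matrix_(i, j) (X i j * Y i j).

Definition opmx n (L : 'cV[R]_(n + n) -> 'cV[R]_(n + n)) : 'M[R]_(n + n) :=
  \matrix_(r, l) (L (delta_mx l 0)) r 0.

End Defs.

(* Main.v *)
Require Import Defs.
From HB Require Import structures.
From mathcomp Require Import all_boot all_order all_algebra.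
From mathcomp Require Import reals.
From Stdlib Require Import ClassicalEpsilon.
Import Order.TTheory GRing.Theory Num.Theory.
Local Open Scope ring_scope.
Set Implicit Arguments. Unset Strict Implicit.

Section Base.
Variable R : realType.

Lemma mdotE m p (X Y : 'M[R]_(m,p)) : mdot X Y = \sum_i \sum_j X i j * Y i j.
Proof.
rewrite [RHS]exchange_big /mdot /mxtrace; apply: eq_bigr => j _; rewrite mxE.
by apply: eq_bigr => i _; rewrite mxE.
Qed.

Lemma mdotC m p (X Y : 'M[R]_(m,p)) : mdot X Y = mdot Y X.
Proof. by rewrite !mdotE; apply: eq_bigr => i _; apply: eq_bigr => j _; rewrite mulrC. Qed.

Lemma mdotDl m p (X Y Z : 'M[R]_(m,p)) : mdot (X + Y) Z = mdot X Z + mdot Y Z.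
Proof.
rewrite !mdotE -big_split; apply: eq_bigr => i _; rewrite -big_split.
by apply: eq_bigr => j _; rewrite mxE mulrDl.
Qed.

Lemma mdotNl m p (X Z : 'M[R]_(m,p)) : mdot (- X) Z = - mdot X Z.
Proof.
rewrite !mdotE -sumrN; apply: eq_bigr => i _; rewrite -sumrN.
by apply: eq_bigr => j _; rewrite mxE mulNr.
Qed.

Lemma mdotBl m p (X Y Z : 'M[R]_(m,p)) : mdot (X - Y) Z = mdot X Z - mdot Y Z.
Proof. by rewrite mdotDl mdotNl. Qed.

Lemma mdotDr m p (X Y Z : 'M[R]_(m,p)) : mdot Z (X + Y) = mdot Z X + mdot Z Y.
Proof. by rewrite mdotC mdotDl ![mdot _ Z]mdotC. Qed.

Lemma mdotBr m p (X Y Z : 'M[R]_(m,p)) : mdot Z (X - Y) = mdot Z X - mdot Z Y.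
Proof. by rewrite mdotC mdotBl ![mdot _ Z]mdotC. Qed.

Lemma mdot0r m p (X : 'M[R]_(m,p)) : mdot X 0 = 0.
Proof. by rewrite mdotE big1 // => i _; rewrite big1 // => j _; rewrite mxE mulr0. Qed.

Lemma mdot0l m p (X : 'M[R]_(m,p)) : mdot 0 X = 0.
Proof. by rewrite mdotC mdot0r. Qed.

Lemma mdot_mulr m p k (X : 'M[R]_(m,p)) (A : 'M[R]_(m,k)) (Y : 'M[R]_(k,p)) :
  mdot X (A *m Y) = mdot (A^T *m X) Y.
Proof. by rewrite /mdot trmx_mul trmxK mulmxA. Qed.

Lemma fnorm2E m p (X : 'M[R]_(m,p)) : fnorm2 X = \sum_i \sum_j X i j ^+ 2.
Proof. by rewrite /fnorm2 mdotE; apply: eq_bigr => i _; apply: eq_bigr => j _; rewrite expr2. Qed.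

Lemma fnorm2_ge0 m p (X : 'M[R]_(m,p)) : 0 <= fnorm2 X.
Proof. by rewrite fnorm2E; apply: sumr_ge0 => i _; apply: sumr_ge0 => j _; apply: sqr_ge0. Qed.

Lemma fnorm2_eq0 m p (X : 'M[R]_(m,p)) : fnorm2 X = 0 -> X = 0.
Proof.
rewrite fnorm2E => /eqP; rewrite psumr_eq0; last first.
  by move=> i _; apply: sumr_ge0 => j _; apply: sqr_ge0.
move=> /allP H; apply/matrixP => i j; rewrite mxE.
have /H := mem_index_enum i; rewrite psumr_eq0; last by move=> *; apply: sqr_ge0.
move=> /allP /(_ j (mem_index_enum j)); by rewrite sqrf_eq0 => /eqP.
Qed.

Lemma mul_tr_eq0 m p (A : 'M[R]_(m,p)) : A *m A^T = 0 -> A = 0.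
Proof.
move=> H; apply: trmx_inj; rewrite trmx0; apply: fnorm2_eq0.
by rewrite /fnorm2 /mdot trmxK H mxtrace0.
Qed.


Lemma unit_GGt k m (G : 'M[R]_(k,m)) : row_free G -> G *m G^T \in unitmx.
Proof.
rewrite -row_free_unit -kermx_eq0 => fG; rewrite -kermx_eq0.
apply/rowV0P => v /sub_kermxP; rewrite mulmxA => H.
have vG0 : v *m G = 0.
  by apply: mul_tr_eq0; rewrite trmx_mul mulmxA H mul0mx.
have : (v <= kermx G)%MS by apply/sub_kermxP.
by move/eqP: fG => ->; rewrite submx0 => /eqP.
Qed.

Lemma MP_fact m r p (F : 'M[R]_(m,r)) (G : 'M[R]_(r,p)) :
  row_free G -> row_free F^T -> exists X, is_MP (F *m G) X.
Proof.
move=> fG fF.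
have uG := unit_GGt fG.
have uF := unit_GGt fF; rewrite trmxK in uF.
set A := F *m G.
set P := invmx (G *m G^T); set Q := invmx (F^T *m F).
have sP : P^T = P by rewrite /P trmx_inv trmx_mul trmxK.
have sQ : Q^T = Q by rewrite /Q trmx_inv trmx_mul trmxK.
exists (G^T *m P *m Q *m F^T).
have AX : A *m (G^T *m P *m Q *m F^T) = F *m Q *m F^T.
  by rewrite /A !mulmxA -(mulmxA F G) -(mulmxA F _ P) mulmxV // mulmx1.
have XA : G^T *m P *m Q *m F^T *m A = G^T *m P *m G.
  by rewrite /A !mulmxA -(mulmxA _ F^T F) -(mulmxA _ Q) mulVmx // mulmx1.
split.
- by rewrite AX /A !mulmxA -(mulmxA _ F^T F) -(mulmxA F Q) mulVmx // mulmx1.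
- by rewrite XA !mulmxA -(mulmxA _ G G^T) -(mulmxA _ (G *m G^T) P) mulmxV // mulmx1.
- by rewrite AX !trmx_mul trmxK sQ mulmxA.
- by rewrite XA !trmx_mul trmxK sP mulmxA.
Qed.

Lemma MP_exists m p (A : 'M[R]_(m,p)) : exists X, is_MP A X.
Proof.
have fG : row_free (row_base A) by apply: row_base_free.
have fF : row_free (col_base A)^T by rewrite /row_free mxrank_tr; apply: col_base_full.
by have := MP_fact fG fF; rewrite mulmx_base.
Qed.

Lemma pinv_MP m p (A : 'M[R]_(m,p)) : is_MP A (pinv A).
Proof. by rewrite /pinv; apply: epsilon_spec; apply: MP_exists. Qed.

Lemma pinvK m p (A : 'M[R]_(m,p)) : A *m pinv A *m A = A.
Proof. by case: (pinv_MP A). Qed.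

Lemma WS0 k q N (W : 'M[R]_(k,q)) (C : 'M[R]_(q,N)) : W *m (C *m C^T) = 0 -> W *m C = 0.
Proof.
move=> H; apply: mul_tr_eq0; by rewrite trmx_mul !mulmxA -(mulmxA W) H mul0mx.
Qed.

Lemma HS_ker q N (C : 'M[R]_(q,N)) (h : 'cV[R]_N) :
  let p := (1%:M - C^T *m pinv (C *m C^T) *m C) *m h in
  C *m p = 0 /\ forall k, C *m k = 0 -> mdot (h - p) k = 0.
Proof.
move=> p; split.
  rewrite /p mulmxBl mul1mx mulmxBr !mulmxA.
  have : (C *m C^T *m pinv (C *m C^T) - 1%:M) *m C = 0.
    apply: WS0; by rewrite mulmxBl mul1mx pinvK subrr.
  by rewrite mulmxBl mul1mx => /eqP; rewrite subr_eq0 => /eqP ->; rewrite subrr.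
move=> k Ck; rewrite /p mulmxBl mul1mx subKr.
by rewrite -!mulmxA mdotC mdot_mulr trmxK Ck mdot0l.
Qed.

Lemma ker_uniq q N (C : 'M[R]_(q,N)) (h p1 p2 : 'cV[R]_N) :
  C *m p1 = 0 -> C *m p2 = 0 ->
  (forall k, C *m k = 0 -> mdot (h - p1) k = 0) ->
  (forall k, C *m k = 0 -> mdot (h - p2) k = 0) -> p1 = p2.
Proof.
move=> C1 C2 O1 O2.
have Ck : C *m (p1 - p2) = 0 by rewrite mulmxBr C1 C2 subrr.
have : fnorm2 (p1 - p2) = 0.
  have E : (h - p2) - (h - p1) = p1 - p2 by rewrite opprB addrC addrA subrK.
  by rewrite /fnorm2 -{1}E mdotBl O1 // O2 // subrr.
by move/fnorm2_eq0/eqP; rewrite subr_eq0 => /eqP.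
Qed.

Lemma lin_sum k1 k2 m1 m2 (f : 'M[R]_(k1,k2) -> 'M[R]_(m1,m2)) :
  (forall a u v, f (a *: u + v) = a *: f u + f v) ->
  forall (I : Type) (r : seq I) (c : I -> R) (u : I -> 'M[R]_(k1,k2)),
  f (\sum_(i <- r) c i *: u i) = \sum_(i <- r) c i *: f (u i).
Proof.
move=> Hf.
have f0 : f 0 = 0.
  have H := Hf 1 0 0; rewrite !scale1r addr0 in H.
  have : f 0 + f 0 - f 0 = f 0 - f 0 by rewrite -H.
  by rewrite addrK subrr.
move=> I r c u; elim: r => [|a r IH]; first by rewrite !big_nil.
by rewrite !big_cons Hf IH.
Qed.

Lemma col_sum_delta k (y : 'cV[R]_k) : y = \sum_l y l 0 *: delta_mx l 0.
Proof.
apply/colP => i; rewrite summxE (bigD1 i) //= big1 ?addr0.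
  by rewrite !mxE !eqxx mulr1.
by move=> l nl; rewrite !mxE eq_sym (negbTE nl) mulr0.
Qed.

Lemma mat_of_lin k m (f : 'cV[R]_k -> 'cV[R]_m) :
  (forall a u v, f (a *: u + v) = a *: f u + f v) ->
  forall y, (\matrix_(r, l) (f (delta_mx l 0)) r 0) *m y = f y.
Proof.
move=> Hf y; rewrite {2}(col_sum_delta y) lin_sum //.
apply/colP => r; rewrite !mxE summxE; apply: eq_bigr => l _.
by rewrite !mxE mulrC.
Qed.

End Base.

Section Birk.
Variable R : realType.
Variable n : nat.

Lemma Bop_lin (a : R) (X Y : 'M[R]_n) : Bop (a *: X + Y) = a *: Bop X + Bop Y.
Proof. by rewrite /Bop linearD linearZ /= !mulmxDl -!scalemxAl scale_col_mx add_col_mx. Qed.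

Lemma BopB (X Y : 'M[R]_n) : Bop (X - Y) = Bop X - Bop Y.
Proof. by rewrite /Bop linearB /= !mulmxBl opp_col_mx add_col_mx. Qed.

Lemma Badj_lin (a : R) (y z : 'cV[R]_(n+n)) : Badj (a *: y + z) = a *: Badj y + Badj z.
Proof.
rewrite /Badj !linearD !linearZ /=.
by rewrite mulmxDl -scalemxAl addrACA.
Qed.

Lemma BopU (X : 'M[R]_n) i : Bop X (lshift n i) 0 = \sum_j X i j.
Proof. by rewrite /Bop col_mxEu mxE; apply: eq_bigr => j _; rewrite mxE mulr1. Qed.

Lemma BopDn (X : 'M[R]_n) j : Bop X (rshift n j) 0 = \sum_i X i j.
Proof. by rewrite /Bop col_mxEd mxE; apply: eq_bigr => i _; rewrite !mxE mulr1. Qed.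

Lemma BadjE (y : 'cV[R]_(n+n)) i j : Badj y i j = y (lshift n i) 0 + y (rshift n j) 0.
Proof. by rewrite /Badj !mxE !big_ord1 !mxE mulr1 mul1r. Qed.

Lemma mdot_Bop (y : 'cV[R]_(n+n)) (X : 'M[R]_n) :
  mdot y (Bop X) = \sum_i y (lshift n i) 0 * \sum_j X i j
                 + \sum_j y (rshift n j) 0 * \sum_i X i j.
Proof.
rewrite mdotE big_split_ord /=.
by congr (_ + _); apply: eq_bigr => i _; rewrite big_ord1 ?BopU ?BopDn.
Qed.

Lemma Badj_adj (y : 'cV[R]_(n+n)) (X : 'M[R]_n) : mdot (Badj y) X = mdot y (Bop X).
Proof.
rewrite mdot_Bop mdotE.
rewrite (eq_bigr (fun i => \sum_j (y (lshift n i) 0 * X i j + y (rshift n j) 0 * X i j)));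
  last by move=> i _; apply: eq_bigr => j _; rewrite BadjE mulrDl.
rewrite (eq_bigr (fun i => \sum_j y (lshift n i) 0 * X i j + \sum_j y (rshift n j) 0 * X i j));
  last by move=> i _; rewrite big_split.
rewrite big_split /=; congr (_ + _).
  by apply: eq_bigr => i _; rewrite mulr_sumr.
by rewrite exchange_big; apply: eq_bigr => j _; rewrite mulr_sumr.
Qed.

Definition Th (Gb : 'M[R]_n) : 'M[R]_n := \matrix_(i, j) (if Gb i j == 0 then 1 else 0).
Definition XiG (Gb : 'M[R]_n) (H : 'M[R]_n) := H - hadamard (Th Gb) H.
Definition Mop Gb := opmx (fun y : 'cV[R]_(n + n) => Bop (XiG Gb (Badj y))).
Definition PG Gb H := XiG Gb H - XiG Gb (Badj (pinv (Mop Gb) *m Bop (XiG Gb H))).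

Variable Gb : 'M[R]_n.

Lemma XiE H i j : XiG Gb H i j = if Gb i j == 0 then 0 else H i j.
Proof. by rewrite !mxE; case: ifP => _; rewrite ?mul1r ?mul0r ?subrr ?subr0. Qed.

Lemma XiM H : XiG Gb H = \matrix_(i, j) (if Gb i j == 0 then 0 else H i j).
Proof. by apply/matrixP => i j; rewrite XiE mxE. Qed.

Lemma Xi_lin a X Y : XiG Gb (a *: X + Y) = a *: XiG Gb X + XiG Gb Y.
Proof.
apply/matrixP => i j; rewrite !XiM !mxE.
by case: ifP => _; rewrite ?mulr0 ?addr0.
Qed.

Lemma XiB X Y : XiG Gb (X - Y) = XiG Gb X - XiG Gb Y.
Proof.
apply/matrixP => i j; rewrite !XiM !mxE.
by case: ifP => _; rewrite ?subr0.
Qed.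

Lemma XiK X : XiG Gb (XiG Gb X) = XiG Gb X.
Proof. by apply/matrixP => i j; rewrite !XiE; case: (Gb i j == 0). Qed.

Lemma Xi_sym X Y : mdot (XiG Gb X) Y = mdot X (XiG Gb Y).
Proof.
rewrite !mdotE; apply: eq_bigr => i _; apply: eq_bigr => j _.
by rewrite !XiE; case: ifP; rewrite ?mul0r ?mulr0.
Qed.

Lemma Mop_mul y : Mop Gb *m y = Bop (XiG Gb (Badj y)).
Proof.
apply: (@mat_of_lin R _ _ (fun y => Bop (XiG Gb (Badj y)))) => a u v /=.
by rewrite Badj_lin Xi_lin Bop_lin.
Qed.

Lemma PG_B H : Bop (PG Gb H) = 0.
Proof.
rewrite /PG BopB -Mop_mul.
set b := Bop (XiG Gb H); set M := Mop Gb; set Y := pinv M.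
set W := M *m Y - 1%:M.
have WM : W *m M = 0 by rewrite /W mulmxBl mul1mx pinvK subrr.
have Wb : W *m b = 0.
  have key : forall u, mdot u (W *m b) = 0.
    move=> u; rewrite mdot_mulr.
    set w := W^T *m u.
    have Xw : XiG Gb (Badj w) = 0.
      apply: fnorm2_eq0; rewrite /fnorm2 Xi_sym XiK Badj_adj -Mop_mul.
      by rewrite /w -/M -mdot_mulr mulmxA WM mul0mx mdot0r.
    by rewrite /b -Badj_adj -Xi_sym Xw mdot0l.
  by apply: fnorm2_eq0; apply: key.
have : W *m b = 0 by [].
rewrite /W mulmxBl mul1mx => /eqP; rewrite subr_eq0 => /eqP.
by rewrite -mulmxA => ->; rewrite subrr.
Qed.

Lemma PG_zero H i j : Gb i j == 0 -> PG Gb H i j = 0.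
Proof. by rewrite /PG -XiB XiE => ->. Qed.

Lemma PG_orth H X : Bop X = 0 -> (forall i j, Gb i j == 0 -> X i j = 0) ->
  mdot (H - PG Gb H) X = 0.
Proof.
move=> BX ZX.
have XX : XiG Gb X = X.
  by apply/matrixP => i j; rewrite XiE; case: ifP => // /ZX ->.
rewrite mdotBl /PG mdotBl !Xi_sym XX Badj_adj BX mdot0r subr0 subrr.
by [].
Qed.

Lemma PG_sym H K : mdot (PG Gb H) K = mdot H (PG Gb K).
Proof.
have E : forall A B, mdot A (PG Gb B) = mdot (PG Gb A) (PG Gb B).
  move=> A B; apply/eqP; rewrite -subr_eq0 -mdotBl; apply/eqP.
  by apply: PG_orth; [apply: PG_B | move=> i j; apply: PG_zero].
by rewrite mdotC E mdotC -E.
Qed.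

Lemma PG_psd H : 0 <= mdot (PG Gb H) H.
Proof.
have E : mdot H (PG Gb H) = mdot (PG Gb H) (PG Gb H).
  apply/eqP; rewrite -subr_eq0 -mdotBl; apply/eqP.
  by apply: PG_orth; [apply: PG_B | move=> i j; apply: PG_zero].
by rewrite mdotC E; apply: fnorm2_ge0.
Qed.

End Birk.

From mathcomp Require Import ring lra.

Section Vec.
Variable R : realType.
Variable n : nat.

Lemma sum_mxvec (F : 'I_(n * n) -> R) : \sum_k F k = \sum_i \sum_j F (mxvec_index i j).
Proof.
rewrite pair_big /= (reindex (uncurry (@mxvec_index n n))) /=.
  by apply: eq_bigr => -[i j].
exact: curry_mxvec_bij.
Qed.

Lemma veccE (X : 'M[R]_n) i j : vecc X (mxvec_index i j) 0 = X i j.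
Proof. by rewrite /vecc mxE mxvecE. Qed.

Lemma vec_mxE' (v : 'rV[R]_(n * n)) i j : vec_mx v i j = v 0 (mxvec_index i j).
Proof. by rewrite mxE. Qed.

Lemma vecc_vec (z : 'cV[R]_(n * n)) : vecc (vec_mx z^T) = z.
Proof. by rewrite /vecc vec_mxK trmxK. Qed.

Lemma vecc_inj : injective (@vecc R n).
Proof. by move=> X Y /(congr1 (fun z => vec_mx z^T)); rewrite /vecc !trmxK !mxvecK. Qed.

Lemma veccB (X Y : 'M[R]_n) : vecc (X - Y) = vecc X - vecc Y.
Proof. by rewrite /vecc !linearB. Qed.

Lemma mdot_vecc (X Y : 'M[R]_n) : mdot (vecc X) (vecc Y) = mdot X Y.
Proof.
rewrite !mdotE sum_mxvec; apply: eq_bigr => i _; apply: eq_bigr => j _.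
by rewrite big_ord1 !veccE.
Qed.

Lemma fnorm2_vecc (X : 'M[R]_n) : fnorm2 (vecc X) = fnorm2 X.
Proof. exact: mdot_vecc. Qed.

Lemma Bmat_mul (z : 'cV[R]_(n * n)) : Bmat R n *m z = Bop (vec_mx z^T).
Proof.
have -> : Bmat R n = \matrix_(r, l) ((fun v : 'cV[R]_(n * n) => Bop (vec_mx v^T)) (delta_mx l 0)) r 0.
  by apply/matrixP => r l; rewrite !mxE trmx_delta.
apply: (@mat_of_lin R _ _ (fun v : 'cV[R]_(n * n) => Bop (vec_mx v^T))) => a u v /=.
by rewrite !linearD !linearZ /= Bop_lin.
Qed.

Lemma Bmat_vecc (X : 'M[R]_n) : Bmat R n *m vecc X = Bop X.
Proof. by rewrite Bmat_mul /vecc trmxK mxvecK. Qed.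

Lemma inD_birk (X : 'M[R]_n) :
  inD (1%:M : 'M[R]_(n * n)) 0 (Bmat R n) (const_mx 1) (vecc X) <-> birkhoff X.
Proof.
rewrite /inD /birkhoff Bmat_vecc mul1mx; split => -[H1 H2]; split => //.
  by move=> i j; have := H1 (mxvec_index i j); rewrite veccE mxE.
by move=> k; case/mxvec_indexP: k => i j; rewrite veccE mxE.
Qed.

Lemma birk_le1 (X : 'M[R]_n) i j : birkhoff X -> X i j <= 1.
Proof.
move=> [H1 H2].
have : Bop X (lshift n i) 0 = 1 by rewrite H1 mxE.
rewrite BopU (bigD1 j) //= => <-.
by rewrite lerDl; apply: sumr_ge0 => k _.
Qed.

Lemma par (U V : 'M[R]_n) :
  fnorm2 (2^-1 *: (U + V)) * 4 + fnorm2 (V - U) = (fnorm2 U + fnorm2 V) * 2.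
Proof.
rewrite !fnorm2E -[in RHS]big_split /= !mulr_suml -big_split /=.
apply: eq_bigr => i _.
rewrite -[in RHS]big_split /= !mulr_suml -big_split /=.
apply: eq_bigr => j _.
by rewrite !mxE /=; field.
Qed.

Lemma birk_uniq (G Y1 Y2 : 'M[R]_n) :
  birkhoff Y1 -> (forall X, birkhoff X -> fnorm2 (G - Y1) <= fnorm2 (G - X)) ->
  birkhoff Y2 -> (forall X, birkhoff X -> fnorm2 (G - Y2) <= fnorm2 (G - X)) ->
  Y1 = Y2.
Proof.
move=> B1 M1 B2 M2.
set Z := 2^-1 *: Y1 + 2^-1 *: Y2.
have BZ : birkhoff Z.
  case: B1 => E1 P1; case: B2 => E2 P2; split.
    apply/colP => r.
    have e1 : Bop Y1 r 0 = 1 by rewrite E1 mxE.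
    have e2 : Bop Y2 r 0 = 1 by rewrite E2 mxE.
    rewrite /= /Z Bop_lin; have -> : Bop (2^-1 *: Y2) = 2^-1 *: Bop Y2.
      by rewrite -[2^-1 *: Y2]addr0 Bop_lin /Bop linear0 mul0mx col_mx0 addr0.
    rewrite mxE [(_ *: Bop Y1) r 0]mxE [(_ *: Bop Y2) r 0]mxE [const_mx 1 r 0]mxE.
    by rewrite e1 e2; field.
  move=> i j; rewrite !mxE; have := P1 i j; have := P2 i j; lra.
have EZ : G - Z = 2^-1 *: ((G - Y1) + (G - Y2)).
  by apply/matrixP => i j; rewrite !mxE; field.
have h1 := M1 _ B2; have h2 := M2 _ B1; have h3 := M1 _ BZ.
have hp := par (G - Y1) (G - Y2).
rewrite -EZ in hp.
have E3 : (G - Y2) - (G - Y1) = Y1 - Y2.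
  by rewrite opprB addrC addrA subrK.
rewrite E3 in hp.
have h0 := fnorm2_ge0 (Y1 - Y2).
have : fnorm2 (Y1 - Y2) = 0 by lra.
by move/fnorm2_eq0/eqP; rewrite subr_eq0 => /eqP.
Qed.

End Vec.

From mathcomp Require classical_sets boolp functions topology normedtype derive matrix_normedtype.

Module Exist.
Import boolp classical_sets functions topology normedtype derive matrix_normedtype.
Import numFieldNormedType.Exports.
Local Open Scope classical_set_scope.
Local Open Scope ring_scope.

Lemma cont_sum (R : realType) (T : topologicalType) (I : Type) (r : seq I) (F : I -> T -> R) :
  (forall i, continuous (F i)) -> continuous (fun x => \sum_(i <- r) F i x).
Proof.
move=> HF; elim: r => [|a r IH].
  have -> : (fun x => \sum_(i <- [::]) F i x) = (fun=> 0) by apply: funext => x; rewrite big_nil.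
  by move=> x; apply: cst_continuous.
have -> : (fun x => \sum_(i <- a :: r) F i x) = (F a + (fun x => \sum_(i <- r) F i x))%R.
  by apply: funext => x; rewrite big_cons.
by move=> x; apply: continuousD; [apply: HF | apply: IH].
Qed.


Lemma projB_exists (R : realType) n (G : 'M[R]_n) :
  exists Y, birkhoff Y /\ forall X, birkhoff X -> fnorm2 (G - Y) <= fnorm2 (G - X).
Proof.
pose g (r : 'I_(n+n)) (v : 'rV[R]_(n*n)) := \sum_l Bmat R n r l * v ord0 l.
have gE : forall v r, g r v = Bop (vec_mx v) r 0.
  move=> v r; rewrite -[v in vec_mx v]trmxK -Bmat_mul mxE /g.
  by apply: eq_bigr => l _; rewrite [v^T _ _]mxE.
pose A := (\bigcap_(r in setT) [set v : 'rV[R]_(n*n) | g r v = 1]) `&`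
          (\bigcap_(k in setT) [set v : 'rV[R]_(n*n) | 0 <= v ord0 k]).
have AE : forall v, A v <-> birkhoff (vec_mx v).
  move=> v; split.
    move=> [H1 H2]; split.
      by apply/colP => r; rewrite -gE mxE; exact: (H1 r I).
    by move=> i j; rewrite mxE; exact: (H2 _ I).
  move=> [H1 H2]; split => [r _|k _] /=.
    by rewrite gE H1 mxE.
  by case/mxvec_indexP: k => i j; have := H2 i j; rewrite mxE.
have cg : forall r, continuous (g r).
  move=> r; apply: cont_sum => l v.
  apply: continuousM; [exact: cst_continuous | exact: coord_continuous].
have clA : closed A.
  apply: closedI; apply: closed_bigI => r _.
    have ce : closed [set x : R | x = 1] by apply: closed_eq.
    exact: (proj1 (continuous_closedP (g r)) (cg r) _ ce).
  have ce : closed [set x : R | 0 <= x] by apply: closed_ge.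
  exact: (proj1 (continuous_closedP _) (@coord_continuous R 1 (n*n) ord0 r) _ ce).
have cpA : compact A.
  have cb := @rV_compact R (n*n) (fun=> `[(0:R), 1]%classic) (fun _ => @segment_compact R 0 1).
  apply: (subclosed_compact clA cb).
  move=> v Av k; have [H1 H2] := proj1 (AE v) Av.
  rewrite /= in_itv /=; case/mxvec_indexP: k => i j.
  have := H2 i j; have := birk_le1 i j (proj1 (AE v) Av); rewrite !mxE => a b.
  by rewrite a b.
have A0 : A !=set0.
  exists (const_mx n%:R^-1); apply/AE.
  have -> : vec_mx (const_mx n%:R^-1 : 'rV[R]_(n*n)) = const_mx n%:R^-1.
    by apply/matrixP => i j; rewrite !mxE.
  split; last by move=> i j; rewrite mxE invr_ge0 ler0n.
  apply/colP => r; rewrite [RHS]mxE -(fintype.splitK r); case: (fintype.split r) => i /=.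
    rewrite BopU (eq_bigr (fun=> n%:R^-1)); last by move=> j _; rewrite mxE.
    rewrite sumr_const card_ord -(mulr_natr n%:R^-1 n) mulVf // pnatr_eq0 -lt0n.
    by apply: leq_ltn_trans (ltn_ord i).
  rewrite BopDn (eq_bigr (fun=> n%:R^-1)); last by move=> j _; rewrite mxE.
  rewrite sumr_const card_ord -(mulr_natr n%:R^-1 n) mulVf // pnatr_eq0 -lt0n.
  by apply: leq_ltn_trans (ltn_ord i).
have cf : {within A, continuous (fun v => fnorm2 (G - vec_mx v))}.
  apply: continuous_subspaceT.
  have -> : (fun v : 'rV[R]_(n*n) => fnorm2 (G - vec_mx v)) =
     (fun v => \sum_i \sum_j (G i j - v ord0 (mxvec_index i j)) * (G i j - v ord0 (mxvec_index i j))).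
    apply: funext => v; rewrite /fnorm2 mdotE; apply: eq_bigr => i _.
    by apply: eq_bigr => j _; rewrite !mxE.
  apply: cont_sum => i; apply: cont_sum => j v.
  have hb : {for v, continuous (fun x : 'rV[R]_(n*n) => G i j - x ord0 (mxvec_index i j))}.
    apply: (@continuousB R R^o _ (fun=> G i j) (fun x : 'rV[R]_(n*n) => x ord0 (mxvec_index i j))).
      exact: cst_continuous.
    exact: coord_continuous.
  exact: (continuousM hb hb).
have [c Ac cmin] := compact_EVT_min A0 cpA cf.
exists (vec_mx c); split; first by apply/AE; rewrite inE in Ac.
move=> X BX; have := cmin (mxvec X); rewrite mxvecK; apply.
by rewrite inE; apply/AE; rewrite mxvecK.
Qed.

End Exist.

Lemma projD_vecc (R : realType) n (G : 'M[R]_n) :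
  projD (1%:M : 'M[R]_(n * n)) 0 (Bmat R n) (const_mx 1) (vecc G) = vecc (projB G).
Proof.
have [Y [BY MY]] := Exist.projB_exists G.
have [BB MB] : birkhoff (projB G) /\ forall X, birkhoff X -> fnorm2 (G - projB G) <= fnorm2 (G - X).
  exact: (epsilon_spec (inhabits (0 : 'M[R]_n)) (fun Y => birkhoff Y /\
    forall X, birkhoff X -> fnorm2 (G - Y) <= fnorm2 (G - X)) (ex_intro _ Y (conj BY MY))).
have exD : exists y, inD (1%:M : 'M[R]_(n * n)) 0 (Bmat R n) (const_mx 1) y /\
    forall z, inD (1%:M : 'M[R]_(n * n)) 0 (Bmat R n) (const_mx 1) z ->
      fnorm2 (vecc G - y) <= fnorm2 (vecc G - z).
  exists (vecc Y); split; first by apply/inD_birk.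
  move=> z; rewrite -(vecc_vec z) => /inD_birk Hz.
  by rewrite -!veccB !fnorm2_vecc; apply: MY.
have [Dy Dmin] := epsilon_spec (inhabits 0) _ exD.
rewrite /projD; set y := epsilon _ _ in Dy Dmin *.
have E : vec_mx y^T = projB G.
  apply: (birk_uniq (G := G)) => //.
    by apply/inD_birk; rewrite vecc_vec.
  move=> X BX; rewrite -fnorm2_vecc veccB vecc_vec -fnorm2_vecc veccB.
  by apply: Dmin; apply/inD_birk.
by rewrite -E vecc_vec.
Qed.

Lemma HSjac_uniq (R : realType) k q N (A : 'M[R]_(k, N)) (b : 'cV[R]_k) (Bc : 'M[R]_(q, N))
  (d : 'cV[R]_q) (x h p : 'cV[R]_N) :
  let I := active A b Bc d x in
  let AI : 'M[R]_(#|I|, N) := rowsub (fun r : 'I_#|I| => enum_val r) A in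
  let C := col_mx AI Bc in
  C *m p = 0 -> (forall z, C *m z = 0 -> mdot (h - p) z = 0) ->
  p = HSjac A b Bc d x *m h.
Proof.
move=> I AI C Cp Op.
have [H1 H2] := HS_ker C h.
exact: (ker_uniq Cp H1 Op H2).
Qed.

Unset Implicit Arguments. Set Strict Implicit.

Theorem proposition3p1 (R : realType) (n : nat) (G : 'M[R]_n) :
  let Gb := projB G in
  let Theta : 'M[R]_n := \matrix_(i, j) (if Gb i j == 0 then 1 else 0) in
  let Xi := fun H : 'M[R]_n => H - hadamard Theta H in
  let BXiBs := opmx (fun y : 'cV[R]_(n + n) => Bop (Xi (Badj y))) in
  let P := fun H : 'M[R]_n => Xi H - Xi (Badj (pinv BXiBs *m Bop (Xi H))) in
  (forall H : 'M[R]_n,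
     vecc (P H) = HSjac (1%:M : 'M[R]_(n * n)) 0 (Bmat R n) (const_mx 1) (vecc G)
                  *m vecc H)
  /\ (forall H K : 'M[R]_n, mdot (P H) K = mdot H (P K))
  /\ (forall H : 'M[R]_n, 0 <= mdot (P H) H).
Proof.
move=> Gb Theta Xi BXiBs P.
have PE : forall H, P H = PG Gb H by [].
split; [|split]; last first.
- by move=> H; rewrite PE; apply: PG_psd.
- by move=> H K; rewrite !PE; apply: PG_sym.
move=> H; rewrite PE; apply: HSjac_uniq.
  set I := active _ _ _ _ _.
have HI : forall i j, (mxvec_index i j \in I) = (Gb i j == 0).
  by move=> i j; rewrite /I inE mul1mx projD_vecc veccE mxE.
have AIm : forall z : 'cV[R]_(n * n), rowsub (fun r : 'I_#|I| => enum_val r) (1%:M : 'M[R]_(n * n)) *m z = rowsub (fun r : 'I_#|I| => enum_val r) z.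
  by move=> z; rewrite mul_rowsub_mx mul1mx.
  rewrite mul_col_mx Bmat_vecc PG_B AIm.
  have -> : rowsub (fun r : 'I_#|I| => enum_val r) (vecc (PG Gb H)) = 0.
    apply/matrixP => r c; rewrite !mxE (ord1 c).
    have := enum_valP r; move: (enum_val r) => k.
    by case/mxvec_indexP: k => i j; rewrite HI mxvecE => /PG_zero ->.
  by rewrite col_mx0.
set I := active _ _ _ _ _.
have HI : forall i j, (mxvec_index i j \in I) = (Gb i j == 0).
  by move=> i j; rewrite /I inE mul1mx projD_vecc veccE mxE.
have AIm : forall z : 'cV[R]_(n * n), rowsub (fun r : 'I_#|I| => enum_val r) (1%:M : 'M[R]_(n * n)) *m z = rowsub (fun r : 'I_#|I| => enum_val r) z.
  by move=> z; rewrite mul_rowsub_mx mul1mx.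
move=> z; rewrite mul_col_mx => /eqP; rewrite col_mx_eq0 => /andP [/eqP Az /eqP Bz].
rewrite -(vecc_vec z) in Az Bz *; set X := vec_mx z^T.
rewrite -veccB mdot_vecc; apply: PG_orth; first by rewrite -Bmat_vecc.
move=> i j Gij; have Hk : mxvec_index i j \in I by rewrite HI.
have := congr1 (fun M : 'cV[R]_#|I| => M (enum_rank_in Hk (mxvec_index i j)) 0) Az.
by rewrite AIm !mxE enum_rankK_in // vec_mxK !mxE.
Qed.
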